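(* Let $(X,d)$ be a compact metric space and $f\colon X\to X$ an equicontinuous homeomorphism. The following are equivalent: (1) $f$ has the limit shadowing property; (2) $f$ has the shadowing property; (3) $\dim X=0$, equivalently $X$ is totally disconnected.
   Context: $f$ is equicontinuous if for every $\epsilon>0$ there is $\delta>0$ such that $d(x,y)\le\delta$ implies $\sup_{n\ge0}d(f^n(x),f^n(y))\le\epsilon$. Shadowing property: for every $\epsilon>0$ there is $\delta>0$ such that every sequence $(x_i)_{i\ge0}$ with $d(f(x_i),x_{i+1})\le\delta$ for all $i$ admits $x\in X$ with $d(x_i,f^i(x))\le\epsilon$ for all $i$. Limit shadowing property: every sequence $(x_i)_{i\ge0}$ with $\lim_i d(f(x_i),x_{i+1})=0$ admits $y\in X$ with $\lim_i d(x_i,f^i(y))=0$. *)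

(* Defs.v *)
From Stdlib Require Export Reals List.
Open Scope R_scope.

Section MetricDefs.
Variable M : Metric_Space.
Local Notation X := (Base M).
Local Notation d := (dist M).

Definition is_open (U : X -> Prop) : Prop :=
  forall x, U x -> exists r, r > 0 /\ forall y, d x y < r -> U y.

Definition compact_space : Prop :=
  forall (I : Type) (U : I -> X -> Prop),
    (forall i, is_open (U i)) -> (forall x, exists i, U i x) ->
    exists l : list I, forall x, exists i, In i l /\ U i x.

Definition continuous_map (f : X -> X) : Prop :=
  forall x eps, eps > 0 -> exists delta, delta > 0 /\
    forall y, d x y < delta -> d (f x) (f y) < eps.

Definition homeomorphism (f : X -> X) : Prop :=
  continuous_map f /\
  exists g : X -> X, continuous_map g /\
    (forall x, g (f x) = x) /\ (forall x, f (g x) = x).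

Fixpoint iter (n : nat) (f : X -> X) (x : X) : X :=
  match n with O => x | S k => f (iter k f x) end.

Definition equicontinuous (f : X -> X) : Prop :=
  forall eps, eps > 0 -> exists delta, delta > 0 /\
    forall x y, d x y <= delta -> forall n, d (iter n f x) (iter n f y) <= eps.

Definition shadowing (f : X -> X) : Prop :=
  forall eps, eps > 0 -> exists delta, delta > 0 /\
    forall xs : nat -> X, (forall i, d (f (xs i)) (xs (S i)) <= delta) ->
      exists x, forall i, d (xs i) (iter i f x) <= eps.

Definition limit_shadowing (f : X -> X) : Prop :=
  forall xs : nat -> X, Un_cv (fun i => d (f (xs i)) (xs (S i))) 0 ->
    exists y, Un_cv (fun i => d (xs i) (iter i f y)) 0.

Definition connected_subset (S : X -> Prop) : Prop :=
  forall U V, is_open U -> is_open V ->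
    (forall x, S x -> U x \/ V x) ->
    (forall x, S x -> U x -> V x -> False) ->
    (forall x, S x -> U x) \/ (forall x, S x -> V x).

Definition totally_disconnected : Prop :=
  forall S, connected_subset S -> forall x y, S x -> S y -> x = y.

(* Lebesgue covering dimension 0: every finite open cover has a finite open
   refinement consisting of pairwise disjoint sets (order <= 1). *)
Definition covers (C : list (X -> Prop)) : Prop :=
  forall x, exists U, In U C /\ U x.

Definition dim_zero : Prop :=
  forall C : list (X -> Prop), Forall is_open C -> covers C ->
    exists V : list (X -> Prop),
      Forall is_open V /\ covers V /\
      (forall W, In W V -> exists U, In U C /\ forall x, W x -> U x) /\
      (forall i j, (i < length V)%nat -> (j < length V)%nat -> i <> j ->
         forall x, nth i V (fun _ => False) x -> nth j V (fun _ => False) x -> False).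

End MetricDefs.

(* Main.v *)
Require Import Defs.
From Stdlib Require Import Reals List Lra Lia Classical ClassicalEpsilon Arith.

Section StateMachine.
Local Open Scope nat_scope.

Fixpoint st (L : nat -> nat) (t : nat) : nat * nat :=
  match t with
  | O => (0, 0)
  | S t' => let (k, j) := st L t' in if S j <? L k then (k, S j) else (S k, 0)
  end.

Lemma concat_loops {T : Type} (a b : T) (R : nat -> T -> T -> Prop) (L : nat -> nat) (c : nat -> nat -> T) (m : nat -> nat) :
 (forall k, c k 0 = a /\ c k (L k) = a /\ c k (m k) = b /\ m k < L k /\
    forall i, i < L k -> R k (c k i) (c k (S i))) ->
 exists (p : nat -> T) (lev : nat -> nat), (forall t, R (lev t) (p t) (p (S t))) /\
   (forall k, exists t0, forall t, t0 <= t -> k <= lev t) /\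
   (forall N, exists t, N <= t /\ p t = a) /\ (forall N, exists t, N <= t /\ p t = b).
Proof.
  intros H.
  assert (Hinv : forall t, snd (st L t) < L (fst (st L t))).
  { induction t as [|t IH]; simpl.
    - destruct (H 0) as [_ [_ [_ [Hm _]]]]. lia.
    - destruct (st L t) as [k j]. simpl in IH.
      destruct (Nat.ltb_spec (S j) (L k)); simpl; auto.
      destruct (H (S k)) as [_ [_ [_ [Hm _]]]]. lia. }
  assert (Hmon1 : forall t, fst (st L t) <= fst (st L (S t))).
  { intros t; simpl. destruct (st L t) as [k j].
    destruct (Nat.ltb_spec (S j) (L k)); simpl; lia. }
  assert (Hmon : forall t t', t <= t' -> fst (st L t) <= fst (st L t')).
  { intros t t' Ht. induction Ht; auto. specialize (Hmon1 m0). lia. }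
  assert (Hrun : forall t k, st L t = (k, 0) -> forall j, j < L k -> st L (t + j) = (k, j)).
  { intros t k Ht j. induction j as [|j IH]; intros Hj.
    - rewrite Nat.add_0_r; auto.
    - rewrite Nat.add_succ_r. simpl. rewrite IH by lia.
      destruct (Nat.ltb_spec (S j) (L k)); [auto|lia]. }
  assert (Hreach : forall k, exists t, st L t = (k, 0)).
  { induction k as [|k [t Ht]].
    - exists 0; reflexivity.
    - destruct (H k) as [_ [_ [_ [Hm _]]]].
      exists (S (t + (L k - 1))). simpl. rewrite (Hrun t k Ht) by lia.
      destruct (Nat.ltb_spec (S (L k - 1)) (L k)); [lia|auto]. }
  assert (Hvis : forall k j, j < L k -> exists t, st L t = (k, j)).
  { intros k j Hj. destruct (Hreach k) as [t Ht]. exists (t + j). apply Hrun; auto. }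
  assert (Hlate : forall N j, j < L (S (fst (st L N))) -> exists t, N <= t /\ st L t = (S (fst (st L N)), j)).
  { intros N j Hj. destruct (Hvis _ j Hj) as [t Ht]. exists t. split; auto.
    destruct (Nat.le_gt_cases N t); auto.
    assert (fst (st L t) <= fst (st L N)) by (apply Hmon; lia). rewrite Ht in H1. simpl in H1. lia. }
  exists (fun t => c (fst (st L t)) (snd (st L t))), (fun t => fst (st L t)).
  split; [|split; [|split]].
  - intros t. specialize (Hinv t). simpl.
    destruct (st L t) as [k j]; simpl in *.
    destruct (H k) as [H0 [HL [_ [_ HR]]]].
    destruct (Nat.ltb_spec (S j) (L k)); simpl.
    + apply HR; auto.
    + destruct (H (S k)) as [H0' _]. rewrite H0'. rewrite <- HL.
      replace (L k) with (S j) by lia. apply HR; auto.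
  - intros k. destruct (Hreach k) as [t0 Ht0]. exists t0. intros t Ht.
    assert (fst (st L t0) <= fst (st L t)) by (apply Hmon; auto). rewrite Ht0 in H0. simpl in H0. auto.
  - intros N. destruct (H (S (fst (st L N)))) as [H0 [_ [_ [Hm _]]]].
    destruct (Hlate N 0) as [t [Ht1 Ht2]]; [lia|]. exists t. split; auto. rewrite Ht2; simpl; auto.
  - intros N. destruct (H (S (fst (st L N)))) as [_ [_ [Hb [Hm _]]]].
    destruct (Hlate N _ Hm) as [t [Ht1 Ht2]]. exists t. split; auto. rewrite Ht2; simpl; auto.
Qed.

End StateMachine.

Open Scope R_scope.


Lemma arch_inv (e : R) : e > 0 -> exists M : nat, / INR (S M) < e.
Proof.
  intros He. destruct (archimed_cor1 e He) as [N [H1 H2]].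
  destruct N as [|M]; [lia|]. exists M; exact H1.
Qed.

Lemma inv_S_pos (k : nat) : / INR (S k) > 0.
Proof. apply Rinv_0_lt_compat. apply lt_0_INR; lia. Qed.

Lemma inv_S_mono (k k' : nat) : (k <= k')%nat -> / INR (S k') <= / INR (S k).
Proof.
  intros H. apply Rinv_le_contravar. apply lt_0_INR; lia. apply le_INR; lia.
Qed.

Lemma nat_min (P : nat -> Prop) : (exists n, P n) -> exists n, P n /\ forall j, (j < n)%nat -> ~ P j.
Proof.
  intros [n Hn].
  assert (forall m, (forall k, (k <= m)%nat -> P k -> exists n, P n /\ forall j, (j < n)%nat -> ~ P j)) as H.
  { induction m as [|m IH]; intros k Hk Pk.
    - exists k; split; auto. intros j Hj; lia.
    - destruct (classic (exists j, (j < k)%nat /\ P j)) as [[j [Hj Pj]]|Hno].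
      + apply (IH j); auto; lia.
      + exists k; split; auto. intros j Hj Pj; apply Hno; eauto. }
  apply (H n n); auto.
Qed.

Section Gen.
Variable M : Metric_Space.
Local Notation X := (Base M).
Local Notation d := (dist M).

Lemma dpos (x y : X) : 0 <= d x y.
Proof. generalize (dist_pos M x y); lra. Qed.

Lemma d0 (x : X) : d x x = 0.
Proof. apply (dist_refl M). reflexivity. Qed.

Lemma dtri (x y z : X) : d x z <= d x y + d y z.
Proof. apply (dist_tri M). Qed.

Lemma dsym (x y : X) : d x y = d y x.
Proof. apply (dist_sym M). Qed.

Lemma ball_open (c : X) (r : R) : is_open M (fun z => d c z < r).
Proof.
  intros z Hz. exists (r - d c z). split; [lra|].
  intros y Hy. generalize (dtri c z y); lra.
Qed.

Hypothesis HC : compact_space M.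

Lemma cluster (xs : nat -> X) (P : nat -> Prop) :
  (forall N, exists n, (N <= n)%nat /\ P n) ->
  exists y, forall e, e > 0 -> forall N, exists n, (N <= n)%nat /\ P n /\ d (xs n) y < e.
Proof.
  intros Hinf. apply NNPP; intros Hno.
  assert (Hall : forall y, exists e N, e > 0 /\ forall n, (N <= n)%nat -> P n -> e <= d (xs n) y).
  { intros y. apply NNPP; intros H1. apply Hno. exists y. intros e He N.
    apply NNPP; intros H2. apply H1. exists e, N. split; auto.
    intros n Hn Pn. apply Rnot_lt_le. intros H3. apply H2. exists n; auto. }
  set (I := {y : X & {e : R & {N : nat | e > 0 /\ forall n, (N <= n)%nat -> P n -> e <= d (xs n) y}}}).
  set (U := fun (i : I) => fun z => d (projT1 i) z < projT1 (projT2 i)).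
  destruct (HC I U) as [l Hl].
  - intros i. apply ball_open.
  - intros x. destruct (Hall x) as [e [N [He HN]]].
    exists (existT _ x (existT _ e (exist _ N (conj He HN)))). unfold U; simpl. rewrite d0; lra.
  - set (Nm := fold_right (fun (i : I) acc => Nat.max (proj1_sig (projT2 (projT2 i))) acc) 0%nat l).
    assert (HNm : forall i, In i l -> (proj1_sig (projT2 (projT2 i)) <= Nm)%nat).
    { unfold Nm; clear. induction l as [|a l IH]; simpl; intros i Hi; [contradiction|].
      destruct Hi as [<-|Hi]; [lia|]. specialize (IH i Hi). lia. }
    destruct (Hinf Nm) as [n [Hn Pn]].
    destruct (Hl (xs n)) as [i [Hi Ui]].
    specialize (HNm i Hi). unfold U in Ui. clear Hi Hl.
    destruct i as [y [e [N [He HN]]]]; simpl in *.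
    specialize (HN n ltac:(lia) Pn). rewrite dsym in Ui. lra.
Qed.

Lemma pair_cluster (A B : nat -> X) :
  exists p q, forall e, e > 0 -> forall N, exists n, (N <= n)%nat /\ d (A n) p < e /\ d (B n) q < e.
Proof.
  destruct (cluster A (fun _ => True)) as [p Hp].
  { intros N; exists N; split; auto. }
  assert (Hk : forall k : nat, exists q, forall e, e > 0 -> forall N, exists n, (N <= n)%nat /\
              d (A n) p < / INR (S k) /\ d (B n) q < e).
  { intros k. apply (cluster B (fun n => d (A n) p < / INR (S k))).
    intros N. destruct (Hp (/ INR (S k)) (inv_S_pos k) N) as [n [H1 [_ H2]]]. eauto. }
  set (qf := fun k => proj1_sig (constructive_indefinite_description _ (Hk k))).
  assert (Hqf : forall k e, e > 0 -> forall N, exists n, (N <= n)%nat /\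
              d (A n) p < / INR (S k) /\ d (B n) (qf k) < e).
  { intros k. unfold qf. destruct (constructive_indefinite_description _ (Hk k)) as [q Hq]. exact Hq. }
  destruct (cluster qf (fun _ => True)) as [q Hq].
  { intros N; exists N; split; auto. }
  exists p, q. intros e He N.
  destruct (arch_inv e He) as [K HK].
  destruct (Hq (e/2) ltac:(lra) K) as [k [Hk1 [_ Hk2]]].
  destruct (Hqf k (e/2) ltac:(lra) N) as [n [Hn [H1 H2]]].
  exists n. split; auto. split.
  - generalize (inv_S_mono K k Hk1); lra.
  - generalize (dtri (B n) (qf k) q); lra.
Qed.

Lemma lebesgue (C : list (X -> Prop)) :
  Forall (is_open M) C -> covers M C ->
  exists g, g > 0 /\ forall x, exists U, In U C /\ forall y, d x y <= g -> U y.
Proof.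
  intros Hop Hcov.
  set (I := {x : X & {r : R | r > 0 /\ exists U, In U C /\ forall y, d x y < r -> U y}}).
  set (Ub := fun (i : I) => fun z => d (projT1 i) z < proj1_sig (projT2 i) / 2).
  destruct (HC I Ub) as [l Hl].
  - intros i. apply ball_open.
  - intros x. destruct (Hcov x) as [U [HU Ux]].
    rewrite Forall_forall in Hop. destruct (Hop U HU x Ux) as [r [Hr Hb]].
    exists (existT _ x (exist _ r (conj Hr (ex_intro _ U (conj HU Hb))))).
    unfold Ub; simpl. rewrite d0; lra.
  - set (g := fold_right (fun (i : I) acc => Rmin (proj1_sig (projT2 i) / 2) acc) 1 l).
    assert (Hg : g > 0 /\ forall i, In i l -> g <= proj1_sig (projT2 i) / 2).
    { unfold g; clear. induction l as [|a l IH]; simpl.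
      - split; [lra|]. intros; contradiction.
      - destruct IH as [IH1 IH2]. destruct a as [x [r [Hr Hx]]]; simpl.
        split. apply Rmin_glb_lt; lra.
        intros i [<-|Hi]; simpl. apply Rmin_l.
        specialize (IH2 i Hi). generalize (Rmin_r (r/2) (fold_right (fun (i : I) acc => Rmin (proj1_sig (projT2 i) / 2) acc) 1 l)). lra. }
    destruct Hg as [Hg1 Hg2].
    exists g. split; auto. intros x.
    destruct (Hl x) as [i [Hi Ui]]. specialize (Hg2 i Hi). unfold Ub in Ui. clear Hi Hl.
    destruct i as [c [r [Hr [U [HU Hb]]]]]; simpl in *.
    exists U. split; auto. intros y Hy. apply Hb. generalize (dtri c x y); lra.
Qed.

End Gen.

Section Ch.
Variable M : Metric_Space.
Local Notation X := (Base M).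
Local Notation d := (dist M).

Definition chainP (e : R) (k : nat) (z : nat -> X) := forall i, (i < k)%nat -> d (z i) (z (S i)) < e.
Definition ch (e : R) (x y : X) := exists k z, z 0%nat = x /\ z k = y /\ chainP e k z.

Lemma ch_refl e x : ch e x x.
Proof. exists 0%nat, (fun _ => x). repeat split. intros i Hi; lia. Qed.

Lemma concat e k1 z1 k2 z2 : chainP e k1 z1 -> chainP e k2 z2 -> z1 k1 = z2 0%nat ->
  exists c, chainP e (k1+k2) c /\ c 0%nat = z1 0%nat /\ c (k1+k2)%nat = z2 k2 /\ c k1 = z1 k1.
Proof.
  intros H1 H2 H12. exists (fun i => if (i <=? k1)%nat then z1 i else z2 (i - k1)%nat). split; [|split; [|split]].
  - intros i Hi.
    destruct (Nat.leb_spec (S i) k1).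
    + destruct (Nat.leb_spec i k1); [|lia]. apply H1; lia.
    + destruct (Nat.leb_spec i k1).
      * assert (i = k1) by lia. subst i. rewrite H12.
        replace (S k1 - k1)%nat with 1%nat by lia. apply H2; lia.
      * replace (S i - k1)%nat with (S (i - k1)) by lia. apply H2; lia.
  - destruct (Nat.leb_spec 0 k1); [reflexivity|lia].
  - destruct (Nat.leb_spec (k1+k2) k1).
    + assert (k2 = 0%nat) by lia. subst k2. rewrite Nat.add_0_r. auto.
    + f_equal; lia.
  - destruct (Nat.leb_spec k1 k1); [reflexivity|lia].
Qed.

Lemma ch_trans e x y w : ch e x y -> ch e y w -> ch e x w.
Proof.
  intros [k1 [z1 [A1 [B1 C1]]]] [k2 [z2 [A2 [B2 C2]]]].
  destruct (concat e k1 z1 k2 z2 C1 C2 ltac:(congruence)) as [c [P [Q [R0 _]]]].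
  exists (k1+k2)%nat, c; split; [|split]; [| |exact P]; congruence.
Qed.

Lemma ch_step e x y : d x y < e -> ch e x y.
Proof.
  intros H. exists 1%nat, (fun i => match i with O => x | _ => y end).
  repeat split. intros i Hi. assert (i = 0%nat) by lia. subst; exact H.
Qed.

Lemma ch_ext e x y w : ch e x y -> d y w < e -> ch e x w.
Proof. intros H1 H2. apply (ch_trans e x y w H1 (ch_step e y w H2)). Qed.

Lemma ch_sym e x y : ch e x y -> ch e y x.
Proof.
  intros [k [z [A [B C]]]]. exists k, (fun i => z (k - i)%nat).
  split; [rewrite Nat.sub_0_r; auto|]. split; [rewrite Nat.sub_diag; auto|].
  intros i Hi. rewrite dsym. replace (k - i)%nat with (S (k - S i)) by lia. apply C; lia.
Qed.

Lemma ch_mono e1 e2 x y : e1 <= e2 -> ch e1 x y -> ch e2 x y.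
Proof.
  intros He [k [z [A [B C]]]]. exists k, z. repeat split; auto.
  intros i Hi. specialize (C i Hi). lra.
Qed.

Lemma loop e a b : ch e a b -> a <> b ->
  exists L c m, c 0%nat = a /\ c L = a /\ c m = b /\ (m < L)%nat /\ chainP e L c.
Proof.
  intros H Hab. destruct H as [k1 [z1 [A1 [B1 C1]]]].
  destruct (ch_sym e a b (ex_intro _ k1 (ex_intro _ z1 (conj A1 (conj B1 C1))))) as [k2 [z2 [A2 [B2 C2]]]].
  destruct (concat e k1 z1 k2 z2 C1 C2 ltac:(congruence)) as [c [P [Q [R0 S0]]]].
  exists (k1+k2)%nat, c; exists k1. split; [|split; [|split; [|split]]]; [| | | |exact P].
  - congruence.
  - congruence.
  - congruence.
  - destruct k2; [|lia]. exfalso; apply Hab; congruence.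
Qed.

End Ch.

Section Dyn.
Variable M : Metric_Space.
Local Notation X := (Base M).
Local Notation d := (dist M).
Variable f g : X -> X.
Hypothesis HC : compact_space M.
Hypothesis Hfg : forall x, f (g x) = x.
Hypothesis HE : equicontinuous M f.

Lemma iter_S' (h : X -> X) n x : iter M (S n) h x = iter M n h (h x).
Proof. induction n as [|n IH]; simpl; auto. simpl in IH. rewrite IH. reflexivity. Qed.

Lemma iter_add (h : X -> X) a b x : iter M (a + b) h x = iter M a h (iter M b h x).
Proof. induction a as [|a IH]; simpl; auto. rewrite IH; auto. Qed.

Lemma iter_fg n x : iter M n f (iter M n g x) = x.
Proof.
  induction n as [|n IH]; auto.
  change (iter M (S n) f (g (iter M n g x)) = x). rewrite iter_S', Hfg. exact IH.
Qed.

Lemma recur a b N th : th > 0 -> exists n, (N <= n)%nat /\ d (iter M n f a) a <= th /\ d (iter M n f b) b <= th.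
Proof.
  intros Hth. destruct (HE th Hth) as [et [Het Heq]].
  destruct (pair_cluster M HC (fun k => iter M k g a) (fun k => iter M k g b)) as [p [q Hpq]].
  destruct (Hpq (et/2) ltac:(lra) 0%nat) as [m [_ [Hm1 Hm2]]].
  destruct (Hpq (et/2) ltac:(lra) (m + N)%nat) as [n' [Hn' [Hn1 Hn2]]].
  exists (n' - m)%nat. split; [lia|].
  assert (Hkey : forall z, d (iter M n' g z) (iter M m g z) <= et -> d (iter M (n' - m) f z) z <= th).
  { intros z Hz. specialize (Heq _ _ Hz n'). rewrite iter_fg in Heq.
    replace n' with ((n' - m) + m)%nat in Heq by lia.
    rewrite iter_add, iter_fg in Heq. rewrite dsym; auto. }
  split; apply Hkey.
  - generalize (dtri M (iter M n' g a) p (iter M m g a)). rewrite (dsym M p). lra.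
  - generalize (dtri M (iter M n' g b) q (iter M m g b)). rewrite (dsym M q). lra.
Qed.

Lemma Inv a b N gm : (forall n, (N <= n)%nat -> d (iter M n f a) (iter M n f b) <= gm) -> d a b <= gm.
Proof.
  intros H. apply Rnot_lt_le. intros Hlt.
  set (th := (d a b - gm) / 4).
  destruct (recur a b N th ltac:(unfold th; lra)) as [n [Hn [H1 H2]]].
  specialize (H n Hn).
  generalize (dtri M a (iter M n f a) b) (dtri M (iter M n f a) (iter M n f b) b).
  rewrite (dsym M a (iter M n f a)). unfold th in *. lra.
Qed.

Lemma inv_equi th : th > 0 -> exists et, et > 0 /\ forall a w t, d (iter M t f a) (iter M t f w) <= et -> d a w <= th.
Proof.
  intros Hth. destruct (HE th Hth) as [et [Het Heq]]. exists et. split; auto.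
  intros a w t Ht. apply (Inv a w t). intros n Hn.
  replace n with ((n - t) + t)%nat by lia. rewrite !iter_add. apply Heq; auto.
Qed.

End Dyn.

Section Main.
Variable M : Metric_Space.
Local Notation X := (Base M).
Local Notation d := (dist M).
Variable f g : X -> X.
Hypothesis HC : compact_space M.
Hypothesis Hfg : forall x, f (g x) = x.
Hypothesis HE : equicontinuous M f.

Definition SC := forall gm, gm > 0 -> exists e, e > 0 /\ forall a b, ch M e a b -> d a b <= gm.

Lemma sh_SC : shadowing M f -> SC.
Proof.
  intros Hs gm Hgm. destruct (Hs (gm/2) ltac:(lra)) as [de [Hde Hsh]].
  destruct (HE de Hde) as [et [Het Heq]]. exists et. split; auto.
  intros a b [k [z [Hz0 [Hzk Hc]]]].
  destruct (Hsh (fun n => iter M n f (z (Nat.min n k)))) as [w Hw].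
  - intros i. change (f (iter M i f (z (Nat.min i k)))) with (iter M (S i) f (z (Nat.min i k))).
    destruct (Nat.lt_ge_cases i k).
    + rewrite Nat.min_l by lia. rewrite Nat.min_l by lia. apply Heq.
      left; apply Hc; auto.
    + rewrite Nat.min_r by lia. rewrite Nat.min_r by lia. rewrite d0. lra.
  - assert (H1 : d a w <= gm/2).
    { specialize (Hw 0%nat). simpl in Hw. rewrite Hz0 in Hw. exact Hw. }
    assert (H2 : d b w <= gm/2).
    { apply (Inv M f g HC Hfg HE b w k). intros n Hn. specialize (Hw n).
      rewrite Nat.min_r in Hw by lia. rewrite Hzk in Hw. exact Hw. }
    generalize (dtri M a w b). rewrite (dsym M w b). lra.
Qed.

Lemma SC_dim0 : SC -> dim_zero M.
Proof.
  intros Hsc C Hop Hcov.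
  destruct (lebesgue M HC C Hop Hcov) as [gm [Hgm Hleb]].
  destruct (Hsc gm Hgm) as [e [He Hch]].
  destruct (HC X (fun p => ch M e p)) as [P HP].
  - intros p y Hy. exists e; split; auto. intros z Hz. apply (ch_ext M e p y z); auto.
  - intros x. exists x. apply ch_refl.
  - destruct (classic (exists x : X, True)) as [[p0 _]|Hne].
    2:{ exists nil. split; [constructor|]. split; [intros x; exfalso; apply Hne; eauto|].
        split; [intros W []|]. intros i j Hi; simpl in Hi; lia. }
    set (W := fun i y => ch M e (nth i P p0) y /\ forall j, (j < i)%nat -> ~ ch M e (nth j P p0) y).
    set (V := map W (seq 0 (length P))).
    assert (HlV : length V = length P) by (unfold V; rewrite length_map, length_seq; auto).
    assert (Hnth : forall i, (i < length V)%nat -> nth i V (fun _ => False) = W i).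
    { intros i Hi. rewrite nth_indep with (d' := W 0%nat) by auto.
      unfold V. rewrite map_nth. rewrite seq_nth by lia. auto. }
    assert (Hin : forall U, In U V -> exists i, (i < length P)%nat /\ U = W i).
    { intros U HU. unfold V in HU. apply in_map_iff in HU. destruct HU as [i [<- Hi]].
      apply in_seq in Hi. exists i; split; [lia|auto]. }
    exists V. split; [|split; [|split]].
    + apply Forall_forall. intros U HU. destruct (Hin U HU) as [i [_ ->]].
      intros y [Hy1 Hy2]. exists e. split; auto. intros z Hz. split.
      * apply (ch_ext M e _ y z); auto.
      * intros j Hj Hcz. apply (Hy2 j Hj). apply (ch_ext M e _ z y); auto. rewrite dsym; auto.
    + intros y. destruct (HP y) as [p [Hp Hpy]].
      destruct (In_nth P p p0 Hp) as [i [Hi Hpi]].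
      destruct (nat_min (fun i => (i < length P)%nat /\ ch M e (nth i P p0) y)) as [i0 [[Hi0 Hc0] Hmin]].
      { exists i. split; auto. rewrite Hpi; auto. }
      exists (W i0). split.
      * unfold V. apply in_map_iff. exists i0. split; auto. apply in_seq. lia.
      * split; auto. intros j Hj Hc. apply (Hmin j Hj). split; auto. lia.
    + intros U HU. destruct (Hin U HU) as [i [_ ->]].
      destruct (Hleb (nth i P p0)) as [U' [HU' Hb]]. exists U'. split; auto.
      intros y [Hy _]. apply Hb. apply Hch; auto.
    + intros i j Hi Hj Hij x Hx1 Hx2. rewrite Hnth in Hx1, Hx2 by auto.
      destruct Hx1 as [A1 B1]. destruct Hx2 as [A2 B2].
      destruct (proj1 (Nat.lt_gt_cases i j) Hij) as [Hlt|Hgt].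
      * apply (B2 i Hlt A1).
      * apply (B1 j Hgt A2).
Qed.

Lemma dim0_sh : dim_zero M -> shadowing M f.
Proof.
  intros Hd eps Heps.
  destruct (HC X (fun c => fun y => d c y < eps/2)) as [l Hl].
  - intros c. apply ball_open.
  - intros x. exists x. rewrite d0. lra.
  - set (C := map (fun c => fun y => d c y < eps/2) l).
    destruct (Hd C) as [V [HVo [HVc [HVr HVd]]]].
    + apply Forall_forall. intros U HU. unfold C in HU. apply in_map_iff in HU.
      destruct HU as [c [<- _]]. apply ball_open.
    + intros x. destruct (Hl x) as [c [Hc Hx]]. exists (fun y => d c y < eps/2). split; auto.
      unfold C. apply in_map_iff. eauto.
    + destruct (lebesgue M HC V HVo HVc) as [lam [Hlam Hleb]].
      destruct (HE lam Hlam) as [de [Hde Heq]].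
      exists de. split; auto. intros xs Hxs. exists (xs 0%nat).
      set (SP := fun a b => exists W, In W V /\ W a /\ W b).
      assert (SP_trans : forall a b c, SP a b -> SP b c -> SP a c).
      { intros a b c [W1 [H1 [A1 B1]]] [W2 [H2 [A2 B2]]].
        destruct (In_nth V W1 (fun _ => False) H1) as [i [Hi E1]].
        destruct (In_nth V W2 (fun _ => False) H2) as [j [Hj E2]].
        destruct (Nat.eq_dec i j) as [<-|Hij].
        - rewrite E1 in E2. subst W2. exists W1. auto.
        - exfalso. apply (HVd i j Hi Hj Hij b); [rewrite E1|rewrite E2]; auto. }
      assert (close : forall a b, d a b <= lam -> SP a b).
      { intros a b Hab. destruct (Hleb a) as [W [HW Hb]]. exists W. split; auto.
        split; apply Hb; auto. rewrite d0; lra. }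
      assert (Hclaim : forall i n, SP (iter M n f (iter M i f (xs 0%nat))) (iter M n f (xs i))).
      { induction i as [|i IH]; intros n.
        - simpl. destruct (HVc (iter M n f (xs 0%nat))) as [W [HW Hy]]. exists W. auto.
        - apply SP_trans with (iter M n f (f (xs i))).
          + specialize (IH (S n)). rewrite !iter_S' in IH. exact IH.
          + apply close. apply Heq. apply Hxs. }
      intros i. destruct (Hclaim i 0%nat) as [W [HW [A B]]]. simpl in A, B.
      destruct (HVr W HW) as [U [HU Hsub]]. unfold C in HU. apply in_map_iff in HU.
      destruct HU as [c [<- _]]. apply Hsub in A. apply Hsub in B.
      generalize (dtri M (xs i) c (iter M i f (xs 0%nat))). rewrite (dsym M (xs i) c). lra.
Qed.

End Main.

Section Main2.
Variable M : Metric_Space.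
Local Notation X := (Base M).
Local Notation d := (dist M).
Variable f g : X -> X.
Hypothesis HC : compact_space M.
Hypothesis Hfg : forall x, f (g x) = x.
Hypothesis HE : equicontinuous M f.

Lemma dneq (x y : X) : x <> y -> d x y > 0.
Proof.
  intros H. destruct (Rle_lt_or_eq_dec 0 (d x y) (dpos M x y)) as [H1|H1]; auto.
  exfalso; apply H. apply (dist_refl M). auto.
Qed.

Lemma choice_nat {A : Type} (P : nat -> A -> Prop) : (forall n, exists a, P n a) ->
  exists F : nat -> A, forall n, P n (F n).
Proof.
  intros H. exists (fun n => proj1_sig (constructive_indefinite_description _ (H n))).
  intros n. destruct (constructive_indefinite_description _ (H n)) as [a Ha]. exact Ha.
Qed.

Lemma dim0_TD : dim_zero M -> totally_disconnected M.
Proof.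
  intros Hd S Hconn x y Hx Hy. apply NNPP; intros Hxy.
  assert (Hr : d x y > 0) by (apply dneq; auto).
  set (r := d x y) in *.
  set (U1 := fun z => d x z < 2*r/3). set (U2 := fun z => r/3 < d x z).
  destruct (Hd (U1 :: U2 :: nil)) as [V [HVo [HVc [HVr HVd]]]].
  - constructor; [apply ball_open|constructor; [|constructor]].
    intros z Hz. exists (d x z - r/3). split; [unfold U2 in Hz; lra|].
    intros w Hw. unfold U2 in *. generalize (dtri M x w z). rewrite (dsym M w z). lra.
  - intros z. destruct (Rlt_or_le (d x z) (2*r/3)).
    + exists U1. split; simpl; auto.
    + exists U2. split; simpl; auto. unfold U2. lra.
  - destruct (HVc x) as [W [HW Wx]].
    destruct (In_nth V W (fun _ => False) HW) as [i [Hi Ei]].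
    destruct (HVr W HW) as [U [HU Hsub]].
    assert (HWU1 : forall z, W z -> U1 z).
    { simpl in HU. destruct HU as [<-|[<-|[]]]; auto.
      exfalso. specialize (Hsub x Wx). unfold U2 in Hsub. rewrite d0 in Hsub. lra. }
    set (A := nth i V (fun _ => False)).
    set (B := fun z => exists j, (j < length V)%nat /\ j <> i /\ nth j V (fun _ => False) z).
    rewrite Forall_forall in HVo.
    destruct (Hconn A B) as [HA|HB].
    + apply HVo. apply nth_In; auto.
    + intros z [j [Hj [Hji Hz]]].
      destruct (HVo _ (nth_In V (fun _ => False) Hj) z Hz) as [r0 [Hr0 Hb]].
      exists r0. split; auto. intros w Hw. exists j. auto.
    + intros z _. destruct (HVc z) as [W' [HW' Hz]].
      destruct (In_nth V W' (fun _ => False) HW') as [j [Hj Ej]].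
      destruct (Nat.eq_dec j i) as [->|Hji].
      * left. unfold A. rewrite Ej. auto.
      * right. exists j. rewrite Ej. auto.
    + intros z _ Az [j [Hj [Hji Bz]]]. apply (HVd i j Hi Hj (not_eq_sym Hji) z Az Bz).
    + specialize (HA y Hy). unfold A in HA. rewrite Ei in HA. apply HWU1 in HA.
      unfold U1 in HA. unfold r in *. lra.
    + destruct (HB x Hx) as [j [Hj [Hji Bx]]].
      apply (HVd i j Hi Hj (not_eq_sym Hji) x); auto. rewrite Ei; auto.
Qed.

Lemma notsmall : ~ SC M -> exists a b, a <> b /\ forall e, e > 0 -> ch M e a b.
Proof.
  intros Hn. apply not_all_ex_not in Hn. destruct Hn as [gm Hgm].
  apply imply_to_and in Hgm. destruct Hgm as [Hgm H2].
  assert (H : forall n : nat, exists ab : X * X, ch M (/ INR (S n)) (fst ab) (snd ab) /\ gm < d (fst ab) (snd ab)).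
  { intros n. apply NNPP; intro Hc. apply H2. exists (/ INR (S n)). split; [apply inv_S_pos|].
    intros a b Hab. apply Rnot_lt_le. intros Hlt. apply Hc. exists (a, b). auto. }
  destruct (choice_nat _ H) as [F HF].
  destruct (pair_cluster M HC (fun n => fst (F n)) (fun n => snd (F n))) as [p [q Hpq]].
  exists p, q. split.
  - intros Epq. subst q. destruct (Hpq (gm/3) ltac:(lra) 0%nat) as [n [_ [H3 H4]]].
    destruct (HF n) as [_ H5].
    generalize (dtri M (fst (F n)) p (snd (F n))). rewrite (dsym M p (snd (F n))). lra.
  - intros e He. destruct (arch_inv e He) as [K HK].
    destruct (Hpq e He K) as [n [Hn [H3 H4]]].
    destruct (HF n) as [H5 _].
    apply ch_trans with (fst (F n)).
    + apply ch_step. rewrite dsym. auto.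
    + apply ch_ext with (snd (F n)); auto.
      apply ch_mono with (/ INR (S n)); auto.
      generalize (inv_S_mono K n Hn). lra.
Qed.

Lemma TD_SC : totally_disconnected M -> SC M.
Proof.
  intros Htd. apply NNPP; intros Hn. destruct (notsmall Hn) as [a [b [Hab Hch]]].
  set (Sset := fun z => forall e, e > 0 -> ch M e a z).
  apply Hab. apply (Htd Sset); [| intros e _; apply ch_refl | exact Hch].
  intros U V HU HV Hcov Hdis.
  apply NNPP; intros Hno. apply not_or_and in Hno. destruct Hno as [HnU HnV].
  apply not_all_ex_not in HnU. destruct HnU as [p Hp]. apply imply_to_and in Hp. destruct Hp as [Sp Up].
  apply not_all_ex_not in HnV. destruct HnV as [q Hq]. apply imply_to_and in Hq. destruct Hq as [Sq Vq].
  set (U' := fun z => exists u r, (Sset u /\ ~ V u) /\ r > 0 /\ (forall y, d u y < r -> U y) /\ d u z < r/2).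
  set (V' := fun z => exists u r, (Sset u /\ ~ U u) /\ r > 0 /\ (forall y, d u y < r -> V y) /\ d u z < r/2).
  assert (U'o : is_open M U').
  { intros z [u [r [H1 [H2 [H3 H4]]]]]. exists (r/2 - d u z). split; [lra|].
    intros w Hw. exists u, r. repeat split; auto; try apply H1. generalize (dtri M u z w). lra. }
  assert (V'o : is_open M V').
  { intros z [u [r [H1 [H2 [H3 H4]]]]]. exists (r/2 - d u z). split; [lra|].
    intros w Hw. exists u, r. repeat split; auto; try apply H1. generalize (dtri M u z w). lra. }
  assert (Hdisj : forall z, U' z -> V' z -> False).
  { intros z [u [r1 [[_ Hu] [_ [Hb1 Hd1]]]]] [v [r2 [[_ Hv] [_ [Hb2 Hd2]]]]].
    generalize (dtri M u z v). rewrite (dsym M z v). intros Htr.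
    destruct (Rle_lt_dec r2 r1).
    - apply Hv. apply Hb1. lra.
    - apply Hu. apply Hb2. rewrite dsym. lra. }
  assert (HSU : forall z, Sset z -> U' z \/ V' z).
  { intros z Sz. destruct (classic (V z)) as [Vz|nVz].
    - right. assert (~ U z) by (intro Uz; apply (Hdis z Sz Uz Vz)).
      destruct (HV z Vz) as [r [Hr Hb]]. exists z, r. repeat split; auto. rewrite d0; lra.
    - left. assert (Uz : U z) by (destruct (Hcov z Sz); tauto).
      destruct (HU z Uz) as [r [Hr Hb]]. exists z, r. repeat split; auto. rewrite d0; lra. }
  assert (U'q : U' q).
  { assert (Uq : U q) by (destruct (Hcov q Sq); tauto).
    destruct (HU q Uq) as [r [Hr Hb]]. exists q, r. repeat split; auto. rewrite d0; lra. }
  assert (V'p : V' p).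
  { assert (Vp : V p) by (destruct (Hcov p Sp); tauto).
    destruct (HV p Vp) as [r [Hr Hb]]. exists p, r. repeat split; auto. rewrite d0; lra. }
  assert (Hn' : forall n : nat, exists c', (exists c, U' c /\ d c c' < / INR (S n)) /\ ~ U' c' /\ ch M (/ INR (S n)) a c').
  { intros n. set (e := / INR (S n)). assert (He : e > 0) by apply inv_S_pos.
    destruct (ch_trans M e q a p (ch_sym M e a q (Sq e He)) (Sp e He)) as [k [z [Hz0 [Hzk Hc]]]].
    destruct (nat_min (fun i => (i <= k)%nat /\ ~ U' (z i))) as [i0 [[Hi0 HU0] Hmin]].
    { exists k. split; auto. rewrite Hzk. intros H; apply (Hdisj p H V'p). }
    destruct i0 as [|j].
    { exfalso. apply HU0. rewrite Hz0. auto. }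
    exists (z (S j)). split; [|split; auto].
    - exists (z j). split; [|apply Hc; lia].
      apply NNPP. intros Hu. apply (Hmin j); [lia|]. split; [lia|auto].
    - apply ch_trans with q; [apply Sq; auto|]. exists (S j), z. split; auto. split; auto.
      intros i Hi. apply Hc; lia. }
  destruct (choice_nat _ Hn') as [cf Hcf].
  destruct (cluster M HC cf (fun _ => True)) as [cs Hcs].
  { intros N; exists N; split; auto. }
  assert (Scs : Sset cs).
  { intros e He. destruct (arch_inv (e/2) ltac:(lra)) as [K HK].
    destruct (Hcs (e/2) ltac:(lra) K) as [n [Hnn [_ Hd]]].
    destruct (Hcf n) as [_ [_ Hc]].
    apply ch_ext with (cf n); [|lra].
    apply ch_mono with (/ INR (S n)); auto. generalize (inv_S_mono K n Hnn). lra. }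
  destruct (HSU cs Scs) as [Hu|Hv].
  - destruct (U'o cs Hu) as [r [Hr Hb]].
    destruct (Hcs r Hr 0%nat) as [n [_ [_ Hd]]].
    destruct (Hcf n) as [_ [Hnu _]]. apply Hnu. apply Hb. rewrite dsym. auto.
  - destruct (V'o cs Hv) as [r [Hr Hb]].
    destruct (arch_inv (r/2) ltac:(lra)) as [K HK].
    destruct (Hcs (r/2) ltac:(lra) K) as [n [Hnn [_ Hd]]].
    destruct (Hcf n) as [[c [Hc1 Hc2]] _].
    apply (Hdisj c Hc1). apply Hb.
    generalize (dtri M cs (cf n) c) (inv_S_mono K n Hnn). rewrite (dsym M cs (cf n)), (dsym M (cf n) c). lra.
Qed.

End Main2.

Section Main3.
Variable M : Metric_Space.
Local Notation X := (Base M).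
Local Notation d := (dist M).
Variable f g : X -> X.
Hypothesis HC : compact_space M.
Hypothesis Hfg : forall x, f (g x) = x.
Hypothesis HE : equicontinuous M f.

Lemma LS_SC : limit_shadowing M f -> SC M.
Proof.
  intros Hls. apply NNPP; intros Hn. destruct (notsmall M HC Hn) as [a [b [Hab Hch]]].
  destruct (choice_nat (fun k et => et > 0 /\ forall x y, d x y <= et -> forall n, d (iter M n f x) (iter M n f y) <= / INR (S k))) as [etf Hetf].
  { intros k. apply HE. apply inv_S_pos. }
  destruct (choice_nat (fun k (t : (nat * (nat -> X)) * nat) =>
      snd (fst t) 0%nat = a /\ snd (fst t) (fst (fst t)) = a /\ snd (fst t) (snd t) = b /\ (snd t < fst (fst t))%nat /\
      chainP M (etf k) (fst (fst t)) (snd (fst t)))) as [LCM HLCM].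
  { intros k. destruct (Hetf k) as [Hpos _].
    destruct (loop M (etf k) a b (Hch _ Hpos) Hab) as [L [c [m H]]]. exists ((L, c), m). exact H. }
  destruct (concat_loops a b (fun k x y => d x y < etf k) (fun k => fst (fst (LCM k)))
     (fun k => snd (fst (LCM k))) (fun k => snd (LCM k)) HLCM) as [p [lev [Hstep [Hlev [Hva Hvb]]]]].
  destruct (Hls (fun t => iter M t f (p t))) as [w Hw].
  - intros e He. destruct (arch_inv e He) as [K HK]. destruct (Hlev K) as [t0 Ht0].
    exists t0. intros t Ht. unfold R_dist. rewrite Rminus_0_r, Rabs_pos_eq by apply dpos.
    change (f (iter M t f (p t))) with (iter M (S t) f (p t)).
    destruct (Hetf (lev t)) as [_ Hq].
    specialize (Hq (p t) (p (S t)) (Rlt_le _ _ (Hstep t)) (S t)).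
    generalize (inv_S_mono K (lev t) (Ht0 t Ht)). lra.
  - assert (Hpos : d a b > 0) by (apply dneq; auto).
    destruct (inv_equi M f g HC Hfg HE (d a b / 3) ltac:(lra)) as [et [Het Hinv]].
    destruct (Hw et Het) as [N HN].
    assert (Hclose : forall t z, (N <= t)%nat -> p t = z -> d z w <= d a b / 3).
    { intros t z Ht Hz. apply (Hinv z w t). specialize (HN t Ht). unfold R_dist in HN.
      rewrite Rminus_0_r, Rabs_pos_eq in HN by apply dpos. rewrite <- Hz. lra. }
    destruct (Hva N) as [t1 [Ht1 Hp1]]. destruct (Hvb N) as [t2 [Ht2 Hp2]].
    generalize (Hclose t1 a Ht1 Hp1) (Hclose t2 b Ht2 Hp2) (dtri M a w b). rewrite (dsym M w b). lra.
Qed.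

Lemma sh_LS : shadowing M f -> limit_shadowing M f.
Proof.
  intros Hs xs Hcv.
  destruct (choice_nat (fun k (Ny : nat * X) => forall i, (fst Ny <= i)%nat -> d (xs i) (iter M i f (snd Ny)) <= / INR (S k))) as [NY HNY].
  { intros k. destruct (Hs (/ INR (S k)) (inv_S_pos k)) as [de [Hde Hsh]].
    destruct (Hcv de Hde) as [N HN].
    destruct (Hsh (fun j => xs (N + j)%nat)) as [w Hw].
    - intros j. rewrite Nat.add_succ_r. specialize (HN (N + j)%nat ltac:(lia)).
      unfold R_dist in HN. rewrite Rminus_0_r, Rabs_pos_eq in HN by apply dpos. lra.
    - exists (N, iter M N g w). simpl. intros i Hi.
      replace i with ((i - N) + N)%nat by lia. rewrite iter_add, (iter_fg M f g Hfg).
      specialize (Hw (i - N)%nat). replace (N + (i - N))%nat with ((i - N) + N)%nat in Hw by lia. exact Hw. }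
  set (yk := fun k => snd (NY k)).
  assert (Hrho : forall k k' j, d (iter M j f (yk k)) (iter M j f (yk k')) <= / INR (S k) + / INR (S k')).
  { intros k k' j. apply (Inv M f g HC Hfg HE _ _ (Nat.max (fst (NY k)) (fst (NY k')))).
    intros n Hn. rewrite <- !iter_add.
    unfold yk. generalize (HNY k (n + j)%nat ltac:(lia)) (HNY k' (n + j)%nat ltac:(lia)).
    generalize (dtri M (iter M (n + j) f (snd (NY k))) (xs (n + j)%nat) (iter M (n + j) f (snd (NY k')))).
    rewrite (dsym M (iter M (n + j) f (snd (NY k))) (xs (n + j)%nat)). lra. }
  destruct (cluster M HC yk (fun _ => True)) as [y Hy].
  { intros N; exists N; split; auto. }
  exists y. intros e He.
  destruct (arch_inv (e/4) ltac:(lra)) as [K HK].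
  destruct (HE (/ INR (S K)) (inv_S_pos K)) as [et [Het Heq]].
  destruct (Hy et Het K) as [k' [Hk' [_ Hd]]].
  exists (fst (NY K)). intros i Hi. unfold R_dist. rewrite Rminus_0_r, Rabs_pos_eq by apply dpos.
  generalize (HNY K i Hi) (Hrho K k' i) (Heq _ _ (Rlt_le _ _ Hd) i) (inv_S_mono K k' Hk').
  generalize (dtri M (xs i) (iter M i f (yk K)) (iter M i f y))
             (dtri M (iter M i f (yk K)) (iter M i f (yk k')) (iter M i f y)).
  unfold yk. lra.
Qed.

End Main3.

Theorem lemma3p1 (M : Metric_Space) (f : Base M -> Base M) :
  compact_space M -> homeomorphism M f -> equicontinuous M f ->
  (limit_shadowing M f <-> shadowing M f) /\
  (shadowing M f <-> dim_zero M) /\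
  (dim_zero M <-> totally_disconnected M).
Proof.
  intros HC [_ [g [_ [_ Hfg]]]] HE.
  assert (SCd : SC M -> dim_zero M) by (apply SC_dim0; auto).
  split; [|split]; split; intros H.
  - apply (dim0_sh M f HC HE). apply SCd. apply (LS_SC M f g HC Hfg HE H).
  - apply (sh_LS M f g HC Hfg HE H).
  - apply SCd. apply (sh_SC M f g HC Hfg HE H).
  - apply (dim0_sh M f HC HE H).
  - apply (dim0_TD M H).
  - apply SCd. apply (TD_SC M HC H).
Qed.
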